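(* Let $C\ge1$ and run Algorithm 3 (described in the context) on an instance of dynamic bin packing with migration delays. Then any item whose initial duration satisfies $d\in[M\sqrt{C},(M+1)\sqrt{C})$ for an integer $M\ge0$ has delayed duration $\tilde d\le d+M\cdot C$. In particular, $\tilde d\le O(\sqrt{C})\cdot d$.
   Context: Dynamic bin packing with migration delays: bins have capacity $1$; items arrive online at times $a_i\ge0$ with size $s_i\in[0,1]$ and initial duration $d_i>0$ (unknown at arrival). Each time an item is migrated (moved to another bin), its duration is increased by $C$; the delayed duration of item $i$ is $\tilde d_i=d_i+(\text{number of migrations of } i)\cdot C$, and the item leaves the system at time $a_i+\tilde d_i$. FirstFit on a pool of bins places an item into the earliest-opened bin of that pool with enough remaining capacity, or opens a new bin in the pool. Algorithm 3: maintain two disjoint pools of bins, $I_s$ (small) and $I_b$ (big). Each arriving item is placed into $I_s$ using FirstFit. When an item has been in $I_s$ for exactly $\sqrt{C}$ time, it is migrated into $I_b$ using FirstFit. When an item has been in $I_b$ for exactly $C+\sqrt{C}$ time since its most recent migration, it is migrated again, into $I_b$ using FirstFit. *)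

(* Defs.v *)
From Stdlib Require Import Reals Lra List.
Open Scope R_scope.

(** Dynamic bin packing with migration delays, Algorithm 3.
    Under Algorithm 3 every migration of an item is triggered purely by a
    timer attached to the item (sqrt C spent in pool I_s, resp. C + sqrt C
    spent in pool I_b since its most recent migration); the choice of the bin
    by FirstFit inside a pool never influences when (or whether) an item is
    migrated.  Hence the migration history of an item -- and thus its delayed
    duration -- is fully described by the following per-item trajectory. *)

Inductive pool := PoolSmall | PoolBig.

Definition alg3_wait (C : R) (p : pool) : R :=
  match p with
  | PoolSmall => sqrt C
  | PoolBig => C + sqrt C
  end.

(** [alg3_traj C a d p e k ms] : an item with arrival time [a] and initial
    duration [d], currently in pool [p] which it entered (arrival or most
    recent migration) at absolute time [e], having been migrated [k] times so
    far, undergoes exactly the further migrations at the absolute times listed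
    in [ms].  An item with [k] migrations is present during
    [a, a + d + k*C) and leaves the system at time [a + d + k*C]; a
    migration scheduled at a time when the item has already left does not
    happen. *)
Fixpoint alg3_traj (C a d : R) (p : pool) (e : R) (k : nat) (ms : list R)
  : Prop :=
  match ms with
  | nil => a + d + INR k * C <= e + alg3_wait C p
  | m :: ms' =>
      m = e + alg3_wait C p /\
      m < a + d + INR k * C /\
      alg3_traj C a d PoolBig m (S k) ms'
  end.

Definition alg3_run (C a d : R) (ms : list R) : Prop :=
  alg3_traj C a d PoolSmall a 0 ms.

Definition delayed_duration (C d : R) (ms : list R) : R :=
  d + INR (length ms) * C.

(* Main.v *)
Require Import Defs.
From Stdlib Require Import Reals List Lra Lia.
Open Scope R_scope.

Lemma inv_step (C a s : R) (k : nat) (e : R) (p : pool) :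
  s = sqrt C -> e + alg3_wait C p = a + INR (S k) * s + INR k * C ->
  (e + alg3_wait C p) + alg3_wait C PoolBig = a + INR (S (S k)) * s + INR (S k) * C.
Proof.
  intros Hs H. simpl alg3_wait. rewrite H. rewrite !S_INR. subst. lra.
Qed.

Lemma count_bound (C a d s : R) : s = sqrt C -> forall ms k p e,
  e + alg3_wait C p = a + INR (S k) * s + INR k * C ->
  (k = 0%nat \/ INR k * s < d) ->
  alg3_traj C a d p e k ms ->
  ((k + length ms)%nat = 0%nat \/ INR (k + length ms) * s < d).
Proof.
  intros Hs ms. induction ms as [|m ms IH]; intros k p e Hinv Hk Ht.
  - simpl. rewrite Nat.add_0_r. exact Hk.
  - simpl in Ht. destruct Ht as [Hm [Hlt Ht]].
    replace (k + length (m :: ms))%nat with (S k + length ms)%nat by (simpl; lia).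
    apply (IH (S k) PoolBig m).
    + rewrite Hm. apply inv_step; auto.
    + right. rewrite Hm, Hinv in Hlt. lra.
    + exact Ht.
Qed.

Lemma exists_traj (C a d s : R) : s = sqrt C -> forall n k p e,
  e + alg3_wait C p = a + INR (S k) * s + INR k * C ->
  d <= INR (S k + n) * s ->
  exists ms, alg3_traj C a d p e k ms.
Proof.
  intros Hs n. induction n as [|n IH]; intros k p e Hinv Hd.
  - exists nil. simpl. rewrite Nat.add_0_r in Hd. rewrite Hinv. lra.
  - destruct (Rle_lt_dec d (INR (S k) * s)) as [Hle|Hgt].
    + exists nil. simpl. rewrite Hinv. lra.
    + destruct (IH (S k) PoolBig (e + alg3_wait C p)) as [ms Hms].
      * apply inv_step; auto.
      * replace (S (S k) + n)%nat with (S k + S n)%nat by lia. exact Hd.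
      * exists ((e + alg3_wait C p) :: ms). simpl. split; [reflexivity|]. split.
        -- rewrite Hinv. lra.
        -- exact Hms.
Qed.

Theorem lemma15 (C a d : R) (M : nat) :
  1 <= C -> 0 <= a -> 0 < d ->
  INR M * sqrt C <= d < (INR M + 1) * sqrt C ->
  (exists ms, alg3_run C a d ms) /\
  (forall ms, alg3_run C a d ms ->
     delayed_duration C d ms <= d + INR M * C /\
     delayed_duration C d ms <= (1 + sqrt C) * d).
Proof.
  intros HC Ha Hd [HM1 HM2].
  set (s := sqrt C).
  assert (Hs1 : 1 <= s).
  { unfold s. rewrite <- sqrt_1. apply sqrt_le_1_alt. exact HC. }
  assert (HsC : s * s = C). { unfold s. apply sqrt_sqrt. lra. }
  assert (Hinv0 : a + alg3_wait C PoolSmall = a + INR 1 * s + INR 0 * C).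
  { simpl. unfold s. lra. }
  split.
  - apply (exists_traj C a d s eq_refl M 0%nat PoolSmall a Hinv0).
    replace (S 0 + M)%nat with (S M) by lia. rewrite S_INR. fold s in HM2. lra.
  - intros ms Hrun. unfold delayed_duration.
    destruct (count_bound C a d s eq_refl ms 0%nat PoolSmall a Hinv0 (or_introl eq_refl) Hrun)
      as [H0|Hlt]; simpl in *.
    + rewrite H0. simpl. pose proof (pos_INR M). split; nra.
    + fold s in HM1, HM2.
      assert (HN : (length ms <= M)%nat).
      { destruct (Compare_dec.le_lt_dec (length ms) M) as [h|h]; auto.
        exfalso.
        assert (INR M + 1 <= INR (length ms)) by (apply le_INR in h; rewrite S_INR in h; lra). nra. }
      apply le_INR in HN. split.
      * apply Rplus_le_compat_l. apply Rmult_le_compat_r; lra.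
      * rewrite <- HsC. pose proof (pos_INR (length ms)). nra.
Qed.
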